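(* Let $n,m\ge 1$, let $\boldsymbol{W}\in\mathbb{R}^{n\times n}$ be symmetric with non-negative entries, $\boldsymbol{S}=(s_{kr})\in[0,1]^{m\times m}$ symmetric with $s_{kk}=0$, $\boldsymbol{\gamma}\in\mathbb{R}^m$, $\boldsymbol{\rho}\in[\frac{\pi}{4},\frac{\pi}{2})^m$, $\alpha\in\mathbb{R}$, and $S_k=\sum_{r}s_{kr}$. Let the neuron set $V=\{1,\dots,n\}$ be bipartitioned as $V=U\cup L$ with $U=\{1,\dots,h\}$, $L=\{h+1,\dots,n\}$. The state space $\mathcal{X}$ consists of matrices $\boldsymbol{X}=(x_{ik})_{i\in V,1\le k\le m}$ with $x_{ik}\in\{\sin\rho_k,-\cos\rho_k\}$, written $\boldsymbol{X}=(\boldsymbol{L},\boldsymbol{U})$ with $\boldsymbol{L}$ the rows indexed by $L$ and $\boldsymbol{U}$ the rows indexed by $U$. Define the energy of the multitask Hopfield network $\mathcal{H}=\langle\boldsymbol{W},\boldsymbol{\gamma},\boldsymbol{\rho},\boldsymbol{S}\rangle$ as $$E_{\mathcal{H}}(\boldsymbol{X})=\sum_{k=1}^m\Big(-\tfrac12 {\boldsymbol{x}^{(k)}}^T\boldsymbol{W}\boldsymbol{x}^{(k)}+\gamma_k\sum_{i=1}^n x_{ik}+\tfrac{\alpha}{2}\Big(S_k\sum_{i=1}^n x_{ik}^2-\sum_{r\ne k}s_{kr}\sum_{i=1}^n x_{ik}x_{ir}\Big)\Big),$$ and, for a fixed $\boldsymbol{L}=(\boldsymbol{l}^{(1)},\dots,\boldsymbol{l}^{(m)})$,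 the energy of the subnetwork $\mathcal{H}_U=\langle\boldsymbol{W}_{UU},\boldsymbol{\gamma},\boldsymbol{\rho},\boldsymbol{S}\rangle$ restricted to $U$ (with labeled neurons clamped to $\boldsymbol{L}$) as $$E_{\mathcal{H}_U}(\boldsymbol{U})=\sum_{k=1}^m\Big(-\tfrac12 {\boldsymbol{u}^{(k)}}^T\boldsymbol{W}_{UU}\boldsymbol{u}^{(k)}+{\boldsymbol{u}^{(k)}}^T\big(\gamma_k\boldsymbol{e}_h-\boldsymbol{W}_{UL}\boldsymbol{l}^{(k)}\big)+\tfrac{\alpha}{2}\Big(S_k\sum_{i=1}^h u_{ik}^2-\sum_{r\ne k}s_{kr}\sum_{i=1}^h u_{ik}u_{ir}\Big)\Big),$$ where $\boldsymbol{u}^{(k)}$ is the $k$-th column of $\boldsymbol{U}$, $\boldsymbol{e}_h$ the all-ones vector of length $h$, and $\boldsymbol{W}_{UU},\boldsymbol{W}_{UL}$ the submatrices of $\boldsymbol{W}$ with rows in $U$ and columns in $U$, resp. $L$. If $\boldsymbol{L}$ is part of a global minimum of $E_{\mathcal{H}}$ (i.e. there exists $\boldsymbol{U}^*$ such that $(\boldsymbol{L},\boldsymbol{U}^* )$ minimizes $E_{\mathcal{H}}$ over $\mathcal{X}$) and $\boldsymbol{U}$ is a global minimum of $E_{\mathcal{H}_U}$, then $(\boldsymbol{L},\boldsymbol{U})$ is a global minimum of $E_{\mathcal{H}}$.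
   Context: $\boldsymbol{x}^{(k)}$ denotes the $k$-th column of $\boldsymbol{X}$ (the state vector for task $k$). In $\mathcal{H}_U$ the contribution of the labeled neurons, whose states are fixed to $\boldsymbol{L}$, is absorbed into the activation thresholds $\gamma_k\boldsymbol{e}_h-\boldsymbol{W}_{UL}\boldsymbol{l}^{(k)}$. *)

(* Defs.v *)
From HB Require Import structures.
From mathcomp Require Import all_boot all_order all_algebra.
From mathcomp Require Import reals trigo.
Set Implicit Arguments. Unset Strict Implicit. Unset Printing Implicit Defensive.
Import Order.TTheory GRing.Theory Num.Theory.
Local Open Scope ring_scope.

Section Hopfield.
Variable R : realType.

Definition is_state (p m : nat) (rho : 'I_m -> R) (X : 'M[R]_(p, m)) : Prop :=
  forall i k, X i k = sin (rho k) \/ X i k = - cos (rho k).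

Definition Ssum (m : nat) (S : 'M[R]_m) (k : 'I_m) : R := \sum_(r < m) S k r.

Definition energy (p m : nat) (W : 'M[R]_p) (gamma : 'I_m -> R) (S : 'M[R]_m)
    (alpha : R) (X : 'M[R]_(p, m)) : R :=
  \sum_(k < m)
    ( - 2^-1 * (\sum_(i < p) \sum_(j < p) X i k * W i j * X j k)
      + gamma k * (\sum_(i < p) X i k)
      + alpha / 2 * (Ssum S k * (\sum_(i < p) X i k ^+ 2)
                     - \sum_(r < m | r != k) S k r * (\sum_(i < p) X i k * X i r))).

(* energy of the subnetwork H_U on U = first h neurons, labeled neurons
   L = last l neurons clamped to Lm; W is indexed by 'I_(h + l) *)
Definition energy_sub (h l m : nat) (W : 'M[R]_(h + l)) (gamma : 'I_m -> R)
    (S : 'M[R]_m) (alpha : R) (Lm : 'M[R]_(l, m)) (U : 'M[R]_(h, m)) : R :=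
  \sum_(k < m)
    ( - 2^-1 * (\sum_(i < h) \sum_(j < h) U i k * W (lshift l i) (lshift l j) * U j k)
      + \sum_(i < h) U i k * (gamma k - \sum_(j < l) W (lshift l i) (rshift h j) * Lm j k)
      + alpha / 2 * (Ssum S k * (\sum_(i < h) U i k ^+ 2)
                     - \sum_(r < m | r != k) S k r * (\sum_(i < h) U i k * U i r))).

End Hopfield.

(* Main.v *)
Require Import Defs.
From HB Require Import structures.
From mathcomp Require Import all_boot all_order all_algebra.
From mathcomp Require Import reals trigo.
From mathcomp Require Import ring.
Import Order.TTheory GRing.Theory Num.Theory.
Local Open Scope ring_scope.

Lemma energy_split (R : realType) (h l m : nat)
  (W : 'M[R]_(h + l)) (S : 'M[R]_m) (gamma : 'I_m -> R) (alpha : R)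
  (Lm : 'M[R]_(l, m)) (U : 'M[R]_(h, m)) : W^T = W ->
  energy W gamma S alpha (col_mx U Lm) =
  energy_sub W gamma S alpha Lm U + energy (drsubmx W) gamma S alpha Lm.
Proof.
move=> WT.
rewrite /energy /energy_sub -big_split /=; apply: eq_bigr => k _.
have sp (F : 'I_(h + l) -> R) : \sum_(i < h + l) F i =
   \sum_(i < h) F (lshift l i) + \sum_(i < l) F (rshift h i) by rewrite big_split_ord.
set X := col_mx U Lm.
have XU i r : X (lshift l i) r = U i r by rewrite col_mxEu.
have XL i r : X (rshift h i) r = Lm i r by rewrite col_mxEd.
set B := \sum_(i < h) \sum_(j < l) U i k * W (lshift l i) (rshift h j) * Lm j k.
have Q : \sum_(i < h + l) \sum_(j < h + l) X i k * W i j * X j k =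
  \sum_(i < h) \sum_(j < h) U i k * W (lshift l i) (lshift l j) * U j k
  + 2 * B + \sum_(i < l) \sum_(j < l) Lm i k * drsubmx W i j * Lm j k.
  rewrite sp; under eq_bigr do rewrite sp.
  under [X in _ + X]eq_bigr do rewrite sp.
  rewrite !big_split /=.
  have -> : \sum_(i < l) \sum_(j < h) X (rshift h i) k * W (rshift h i) (lshift l j) * X (lshift l j) k = B.
    rewrite exchange_big /=; apply: eq_bigr => i _; apply: eq_bigr => j _.
    rewrite XU XL.
    have -> : W (rshift h j) (lshift l i) = W (lshift l i) (rshift h j).
      by have := congr1 (fun M : 'M[R]_(h + l) => M (lshift l i) (rshift h j)) WT; rewrite mxE => ->.
    ring.
  have -> : \sum_(i < h) \sum_(j < l) X (lshift l i) k * W (lshift l i) (rshift h j) * X (rshift h j) k = B.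
    by apply: eq_bigr => i _; apply: eq_bigr => j _; rewrite XU XL.
  have -> : \sum_(i < h) \sum_(j < h) X (lshift l i) k * W (lshift l i) (lshift l j) * X (lshift l j) k
     = \sum_(i < h) \sum_(j < h) U i k * W (lshift l i) (lshift l j) * U j k.
    by apply: eq_bigr => i _; apply: eq_bigr => j _; rewrite !XU.
  have -> : \sum_(i < l) \sum_(j < l) X (rshift h i) k * W (rshift h i) (rshift h j) * X (rshift h j) k
     = \sum_(i < l) \sum_(j < l) Lm i k * drsubmx W i j * Lm j k.
    by apply: eq_bigr => i _; apply: eq_bigr => j _; rewrite !XL /drsubmx /rsubmx /dsubmx !mxE.
  ring.
have G : \sum_(i < h + l) X i k = \sum_(i < h) U i k + \sum_(i < l) Lm i k.
  by rewrite sp; congr (_ + _); apply: eq_bigr => i _; rewrite ?XU ?XL.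
have Sq : \sum_(i < h + l) X i k ^+ 2 = \sum_(i < h) U i k ^+ 2 + \sum_(i < l) Lm i k ^+ 2.
  by rewrite sp; congr (_ + _); apply: eq_bigr => i _; rewrite ?XU ?XL.
have Cr : \sum_(r < m | r != k) S k r * (\sum_(i < h + l) X i k * X i r) =
   \sum_(r < m | r != k) S k r * (\sum_(i < h) U i k * U i r)
 + \sum_(r < m | r != k) S k r * (\sum_(i < l) Lm i k * Lm i r).
  rewrite -big_split /=; apply: eq_bigr => r _; rewrite -mulrDr sp.
  by congr (_ * (_ + _)); apply: eq_bigr => i _; rewrite ?XU ?XL.
have Sub : \sum_(i < h) U i k * (gamma k - \sum_(j < l) W (lshift l i) (rshift h j) * Lm j k)
   = gamma k * \sum_(i < h) U i k - B.
  rewrite big_distrr /= /B -sumrB; apply: eq_bigr => i _.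
  rewrite mulrBr big_distrr /=; congr (_ - _); first by rewrite mulrC.
  by apply: eq_bigr => j _; rewrite mulrA.
rewrite Q G Sq Cr Sub; field; by rewrite ?pnatr_eq0 ?oner_eq0 ?(eqr_nat _ 2 0).
Qed.

Theorem theorem3 (R : realType) (h l m : nat)
  (W : 'M[R]_(h + l)) (S : 'M[R]_m) (gamma rho : 'I_m -> R) (alpha : R)
  (Lm : 'M[R]_(l, m)) (U : 'M[R]_(h, m)) :
  (0 < h + l)%N -> (0 < m)%N ->
  W^T = W -> (forall i j, 0 <= W i j) ->
  S^T = S -> (forall k r, 0 <= S k r <= 1) -> (forall k, S k k = 0) ->
  (forall k, pi / 4 <= rho k < pi / 2) ->
  (exists Ustar : 'M[R]_(h, m),
      is_state rho (col_mx Ustar Lm) /\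
      forall Y : 'M[R]_(h + l, m), is_state rho Y ->
        energy W gamma S alpha (col_mx Ustar Lm) <= energy W gamma S alpha Y) ->
  is_state rho U ->
  (forall U' : 'M[R]_(h, m), is_state rho U' ->
     energy_sub W gamma S alpha Lm U <= energy_sub W gamma S alpha Lm U') ->
  is_state rho (col_mx U Lm) /\
  forall Y : 'M[R]_(h + l, m), is_state rho Y ->
    energy W gamma S alpha (col_mx U Lm) <= energy W gamma S alpha Y.
Proof.
move=> _ _ WT _ _ _ _ _ [Us [sUs minUs]] sU minU.
have sL : is_state rho Lm.
  by move=> i k; have := sUs (rshift h i) k; rewrite col_mxEd.
have sUs' : is_state rho Us.
  by move=> i k; have := sUs (lshift l i) k; rewrite col_mxEu.
split.
  move=> i k; rewrite -[i](splitK i); case: (split i) => j /=; [rewrite col_mxEu; exact: sU | rewrite col_mxEd; exact: sL].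
move=> Y sY; apply: le_trans (minUs Y sY).
rewrite !energy_split // lerD2r; exact: minU.
Qed.
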